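(* Let $(V_1,V_2)$ be a pair of commuting isometries on a Hilbert space with $\operatorname{ran}V_1=\operatorname{ran}V_2$. If $V_1V_2$ is pure, then both $V_1$ and $V_2$ are pure.
   Context: An isometry $T$ is pure if $T^{*n}\to0$ strongly as $n\to\infty$ (equivalently, $T$ is a unilateral shift of some multiplicity). *)

(* Defs.v *)
From mathcomp Require Import all_boot all_algebra complex reals.
Set Implicit Arguments. Unset Strict Implicit. Unset Printing Implicit Defensive.
Import GRing.Theory Num.Theory.
Local Open Scope ring_scope.

Section Hilbert.
Variables (R : realType) (H : lmodType R[i]) (ip : H -> H -> R[i]).

Definition is_inner_product : Prop :=
  [/\ forall (a : R[i]) (x y z : H), ip (a *: x + y) z = a * ip x z + ip y z,
      forall x y : H, ip y x = (ip x y)^*,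
      forall x : H, 0 <= ip x x
    & forall x : H, ip x x = 0 -> x = 0].

Definition hnorm (x : H) : R := Num.sqrt (complex.Re (ip x x)).

Definition hilbert_complete : Prop :=
  forall u : nat -> H,
    (forall e : R, 0 < e -> exists N : nat, forall m n : nat,
        (N <= m)%N -> (N <= n)%N -> hnorm (u m - u n) < e) ->
    exists l : H, forall e : R, 0 < e -> exists N : nat, forall n : nat,
        (N <= n)%N -> hnorm (u n - l) < e.

Definition is_hilbert : Prop := is_inner_product /\ hilbert_complete.

Definition is_linear_op (T : H -> H) : Prop :=
  forall (a : R[i]) (x y : H), T (a *: x + y) = a *: T x + T y.

Definition is_isometry (V : H -> H) : Prop :=
  is_linear_op V /\ forall x : H, hnorm (V x) = hnorm x.

Definition is_adjoint (T A : H -> H) : Prop :=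
  forall x y : H, ip (T x) y = ip x (A y).

Definition is_pure (T : H -> H) : Prop :=
  exists A : H -> H, is_adjoint T A /\
    forall x : H, forall e : R, 0 < e -> exists N : nat, forall n : nat,
      (N <= n)%N -> hnorm (iter n A x) < e.

Definition op_range (T : H -> H) (y : H) : Prop := exists x : H, y = T x.

End Hilbert.

(* Main.v *)
Require Import Defs.
From mathcomp Require Import all_boot all_algebra complex reals.
Import GRing.Theory Num.Theory.
Local Open Scope ring_scope.

Lemma ip_addl {R : realType} {H : lmodType R[i]} {ip : H -> H -> R[i]}
  (hip : is_inner_product ip) (x y z : H) : ip (x + y) z = ip x z + ip y z.
Proof. case: hip => L _ _ _. by rewrite -[x in LHS]scale1r L mul1r. Qed.

Lemma ip_scalel {R : realType} {H : lmodType R[i]} {ip : H -> H -> R[i]}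
  (hip : is_inner_product ip) (a : R[i]) (x z : H) : ip (a *: x) z = a * ip x z.
Proof.
have h0 : ip 0 z = 0.
  have := ip_addl hip 0 0 z. rewrite addr0 => E.
  by apply: (addrI (ip 0 z)); rewrite addr0 -E.
case: hip => L _ _ _. by rewrite -[_ *: _]addr0 L h0 addr0.
Qed.

Lemma ip_oppl {R : realType} {H : lmodType R[i]} {ip : H -> H -> R[i]}
  (hip : is_inner_product ip) (x z : H) : ip (- x) z = - ip x z.
Proof. by rewrite -scaleN1r ip_scalel // mulN1r. Qed.

Lemma ip_addr {R : realType} {H : lmodType R[i]} {ip : H -> H -> R[i]}
  (hip : is_inner_product ip) (x y z : H) : ip z (x + y) = ip z x + ip z y.
Proof.
have [_ C _ _] := hip.
by rewrite (C (x+y) z) (C x z) (C y z) ip_addl // rmorphD.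
Qed.

Lemma ip_scaler {R : realType} {H : lmodType R[i]} {ip : H -> H -> R[i]}
  (hip : is_inner_product ip) (a : R[i]) (x z : H) : ip z (a *: x) = a^* * ip z x.
Proof.
have [_ C _ _] := hip.
by rewrite (C (a *: x) z) (C x z) ip_scalel // rmorphM.
Qed.

Lemma ip_oppr {R : realType} {H : lmodType R[i]} {ip : H -> H -> R[i]}
  (hip : is_inner_product ip) (x z : H) : ip z (- x) = - ip z x.
Proof. by rewrite -scaleN1r ip_scaler // rmorphN rmorph1 mulN1r. Qed.

Lemma ip_uniq {R : realType} {H : lmodType R[i]} {ip : H -> H -> R[i]}
  (hip : is_inner_product ip) (a b : H) :
  (forall x, ip x a = ip x b) -> a = b.
Proof.
move=> E; apply/eqP; rewrite -subr_eq0; apply/eqP.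
have [_ _ _ D] := hip; apply: D.
by rewrite ip_addr // ip_oppr // E subrr.
Qed.

Lemma lin0 {R : realType} {H : lmodType R[i]} (V : H -> H) :
  is_linear_op V -> V 0 = 0.
Proof.
move=> L; have := L 1 0 0; rewrite scale1r addr0 scale1r => E.
by apply: (addrI (V 0)); rewrite addr0 -E.
Qed.

Lemma linD {R : realType} {H : lmodType R[i]} (V : H -> H) :
  is_linear_op V -> forall x y, V (x + y) = V x + V y.
Proof. by move=> L x y; rewrite -[x in LHS]scale1r L scale1r. Qed.

Lemma linZ {R : realType} {H : lmodType R[i]} (V : H -> H) :
  is_linear_op V -> forall a x, V (a *: x) = a *: V x.
Proof. by move=> L a x; rewrite -[_ *: _]addr0 L lin0 // addr0. Qed.

Lemma ge0_complex {R : realType} {a : R[i]} : 0 <= a -> a = Complex (complex.Re a) 0.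
Proof.
case: a => ar ai; rewrite lecE /= => /andP [/eqP -> _].
by [].
Qed.

Lemma iso_ipxx {R : realType} {H : lmodType R[i]} {ip : H -> H -> R[i]}
  (hip : is_inner_product ip) (V : H -> H) :
  is_isometry ip V -> forall x, ip (V x) (V x) = ip x x.
Proof.
move=> [_ N] x; have [_ _ P _] := hip.
rewrite (ge0_complex (P (V x))) (ge0_complex (P x)).
have := N x; rewrite /hnorm => E.
have Pr : forall y, 0 <= complex.Re (ip y y).
  by move=> y; have := P y; rewrite lecE => /andP [_].
by rewrite -(sqr_sqrtr (Pr (V x))) -(sqr_sqrtr (Pr x)) E.
Qed.

From mathcomp Require Import ring.

Lemma cancel4 (F : comRingType) (p q a b c d : F) :
  p + a + (b + q) = p + c + (d + q) -> a + b = c + d.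
Proof.
move=> h. have e1 : a + b = p + a + (b + q) - p - q by ring.
by rewrite e1 h; ring.
Qed.

Lemma polar {R : realType} {H : lmodType R[i]} {ip : H -> H -> R[i]}
  (hip : is_inner_product ip) (x y : H) :
  2 * ip x y = (ip x y + ip y x) + 'i * (ip x ('i *: y) + ip ('i *: y) x).
Proof.
rewrite (ip_scaler hip) (ip_scalel hip) conjCi.
have i2 : 'i * 'i = -1 :> R[i] by rewrite -expr2 sqrCi.
transitivity (ip x y + ip y x - ('i * 'i) * ip x y + ('i * 'i) * ip y x).
  by rewrite i2; ring.
ring.
Qed.

Lemma iso_ip {R : realType} {H : lmodType R[i]} {ip : H -> H -> R[i]}
  (hip : is_inner_product ip) (V : H -> H) :
  is_isometry ip V -> forall x y, ip (V x) (V y) = ip x y.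
Proof.
move=> iso x y; have [L _] := iso.
have S : forall u v, ip (V u) (V v) + ip (V v) (V u) = ip u v + ip v u.
  move=> u v; have := iso_ipxx hip _ iso (u + v).
  rewrite (linD V L) (ip_addl hip) (ip_addr hip) (ip_addr hip).
  rewrite (ip_addl hip) (ip_addr hip) (ip_addr hip).
  rewrite (iso_ipxx hip _ iso u) (iso_ipxx hip _ iso v).
  exact: cancel4.
apply: (mulfI (_ : 2 != 0)); first by rewrite pnatr_eq0.
by rewrite (polar hip) (polar hip) -(linZ V L) S S.
Qed.

Lemma pure1 {R : realType} {H : lmodType R[i]} {ip : H -> H -> R[i]}
  (hip : is_inner_product ip) (V1 V2 : H -> H)
  (iso1 : is_isometry ip V1) (iso2 : is_isometry ip V2)
  (comm : forall x : H, V1 (V2 x) = V2 (V1 x))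
  (ran : forall y : H, op_range V1 y <-> op_range V2 y)
  (B : H -> H) (adjB : forall x y, ip (V1 (V2 x)) y = ip x (B y))
  (pB : forall x : H, forall e : R, 0 < e -> exists N : nat, forall n : nat,
      (N <= n)%N -> hnorm ip (iter n B x) < e) :
  is_pure ip V1.
Proof.
have [A adjA] : exists A : H -> H, forall x y, ip (V1 x) y = ip x (A y).
  exists (fun y => B (V2 y)) => x y.
  by rewrite -adjB comm (iso_ip hip _ iso2).
have [A2 adjA2] : exists A : H -> H, forall x y, ip (V2 x) y = ip x (A y).
  exists (fun y => B (V1 y)) => x y.
  by rewrite -adjB (iso_ip hip _ iso1).
have BA : forall y, B y = A (A2 y).
  move=> y; apply: (ip_uniq hip) => x.
  by rewrite -adjA -adjA2 -comm adjB.
have BA' : forall y, B y = A2 (A y).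
  move=> y; apply: (ip_uniq hip) => x.
  by rewrite -adjA2 -adjA adjB.
have commAA2 : forall y, A (A2 y) = A2 (A y) by move=> y; rewrite -BA -BA'.
have normA2 : forall y, hnorm ip (A2 y) = hnorm ip (A y).
  move=> y.
  have step1 : A2 y = A2 (V1 (A y)).
    apply: (ip_uniq hip) => x; rewrite -!adjA2.
    have [u ->] : op_range V1 (V2 x) by apply/ran; exists x.
    by rewrite (iso_ip hip _ iso1) adjA.
  have [w hw] : op_range V2 (V1 (A y)) by apply/ran; exists (A y).
  have A2V2 : A2 (V2 w) = w.
    by apply: (ip_uniq hip) => x; rewrite -adjA2 (iso_ip hip _ iso2).
  by rewrite step1 hw A2V2 -(proj2 iso2 w) -hw (proj2 iso1).
have commute_iter : forall k z, iter k A (A2 z) = A2 (iter k A z).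
  by elim=> // k IH z /=; rewrite IH commAA2.
have key : forall m k y,
    hnorm ip (iter k A (iter m A2 y)) = hnorm ip (iter (k + m) A y).
  elim=> [|m IH] k y; first by rewrite addn0.
  by rewrite iterS commute_iter normA2 -iterS IH addSnnS.
have iterB : forall n y, iter n B y = iter n A (iter n A2 y).
  by elim=> // n IH y /=; rewrite IH BA commute_iter.
exists A; split; first exact: adjA.
move=> x e e0.
have [N1 h1] := pB x e e0; have [N2 h2] := pB (A x) e e0.
exists (N1 + N2).*2 => n hn.
have hB : forall z, hnorm ip (iter n./2 B z) = hnorm ip (iter (n./2 + n./2) A z).
  by move=> z; rewrite iterB key.
have hh : (N1 + N2 <= n./2)%N by rewrite geq_half_double.
rewrite -(odd_double_half n); case: (odd n).
  rewrite add1n iterSr -addnn -hB; apply: h2.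
  by apply: leq_trans hh; rewrite leq_addl.
rewrite add0n -addnn -hB; apply: h1.
by apply: leq_trans hh; rewrite leq_addr.
Qed.

Theorem corollary5p5 (R : realType) (H : lmodType R[i]) (ip : H -> H -> R[i])
  (hH : is_hilbert ip) (V1 V2 : H -> H)
  (iso1 : is_isometry ip V1) (iso2 : is_isometry ip V2)
  (comm : forall x : H, V1 (V2 x) = V2 (V1 x))
  (ran : forall y : H, op_range V1 y <-> op_range V2 y) :
  is_pure ip (fun x => V1 (V2 x)) -> is_pure ip V1 /\ is_pure ip V2.
Proof.
have [hip _] := hH.
move=> [B [adjB pB]]; split.
  exact (pure1 hip _ _ iso1 iso2 comm ran _ adjB pB).
apply: (pure1 hip _ _ iso2 iso1 (fun x => esym (comm x))
         (fun y => iff_sym (ran y)) B _ pB).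
by move=> x y; rewrite -comm; apply: adjB.
Qed.
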